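(* Let $M\in\mathbb R^{n\times n}$ be sufficient, $B$ a complementary basis, $i\in B$, and suppose $B'=(B\setminus\{i\})\cup\{\bar i\}$ is a basis (i.e. $A_{\cdot B'}$ is invertible). Then $\mathcal C(B\setminus\{i\})$ is a facet (face of dimension $n-1$) of both $\mathcal C(B)$ and $\mathcal C(B')$, $\mathcal C(B)\cap\mathcal C(B')=\mathcal C(B\setminus\{i\})$, and for every complementary basis $B''\notin\{B,B'\}$ the cone $\mathcal C(B'')$ does not intersect the relative interior of $\mathcal C(B\setminus\{i\})$.
   Context: Let $M\in\mathbb R^{n\times n}$ and $A=[\,I\;\;-M\,]\in\mathbb R^{n\times 2n}$, with columns indexed by $\{1,\dots,2n\}$; for $J\subseteq\{1,\dots,2n\}$, $A_{\cdot J}$ denotes the submatrix of columns indexed by $J$. For $i\in\{1,\dots,2n\}$ the complementary index is $\bar i=i+n$ if $i\le n$ and $\bar i=i-n$ if $i>n$. A set $J$ is complementary if $i\in J$ implies $\bar i\notin J$. A complementary basis is a complementary set $B$ with $|B|=n$ and $A_{\cdot B}$ invertible. For a complementary set $J$, the complementary cone is $\mathcal C(J)=\{A_{\cdot J}\lambda:\lambda\ge 0\}$. $M$ is column sufficient if $[z_i(Mz)_i\le 0\ \forall i]\Rightarrow[z_i(Mz)_i=0\ \forall i]$; row sufficient if $M^T$ is column sufficient; sufficient if both. *)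

(* Defs.v *)
(* Scalars: an arbitrary real field R (the paper uses the
   reals; everything here is order-algebraic, so R : realFieldType is a
   faithful generalization).  Vectors of R^n are row vectors 'rV[R]_n. *)
From HB Require Import structures.
From mathcomp Require Import all_boot all_order all_algebra.
Set Implicit Arguments. Unset Strict Implicit. Unset Printing Implicit Defensive.
Import Order.TTheory GRing.Theory Num.Theory.
Local Open Scope ring_scope.

Section LCP.
Variables (R : realFieldType) (n : nat).

Definition Amat (M : 'M[R]_n) : 'M[R]_(n, n + n) := row_mx 1%:M (- M).

Definition compl_idx (i : 'I_(n + n)) : 'I_(n + n) :=
  match split i with
  | inl j => rshift n j
  | inr j => lshift n j
  end.

Definition complementary (J : {set 'I_(n + n)}) : Prop :=
  forall i, i \in J -> compl_idx i \notin J.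

(* the submatrix A_{.J} (columns of J, in increasing enumeration order) *)
Definition Asub (M : 'M[R]_n) (J : {set 'I_(n + n)}) : 'M[R]_(n, #|J|) :=
  colsub (@enum_val _ (mem J)) (Amat M).

Definition is_basis (M : 'M[R]_n) (J : {set 'I_(n + n)}) : Prop :=
  exists e : #|J| = n, castmx (erefl n, e) (Asub M J) \in unitmx.

Definition comp_basis (M : 'M[R]_n) (J : {set 'I_(n + n)}) : Prop :=
  complementary J /\ is_basis M J.

Definition gen (M : 'M[R]_n) (j : 'I_(n + n)) : 'rV[R]_n := (col j (Amat M))^T.

Definition cone (M : 'M[R]_n) (J : {set 'I_(n + n)}) (x : 'rV[R]_n) : Prop :=
  exists lam : 'I_(n + n) -> R,
    (forall j, j \in J -> 0 <= lam j) /\ x = \sum_(j in J) lam j *: gen M j.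

Definition column_sufficient (M : 'M[R]_n) : Prop :=
  forall z : 'cV[R]_n,
    (forall k, z k 0 * (M *m z) k 0 <= 0) ->
    (forall k, z k 0 * (M *m z) k 0 = 0).

Definition row_sufficient (M : 'M[R]_n) : Prop := column_sufficient M^T.

Definition sufficient (M : 'M[R]_n) : Prop :=
  column_sufficient M /\ row_sufficient M.

Definition convex (S : 'rV[R]_n -> Prop) : Prop :=
  forall x y (t : R), S x -> S y -> 0 <= t <= 1 -> S (t *: x + (1 - t) *: y).

Definition is_face (F C : 'rV[R]_n -> Prop) : Prop :=
  (forall x, F x -> C x) /\ convex F /\
  (forall x y (t : R), C x -> C y -> 0 < t < 1 ->
     F (t *: x + (1 - t) *: y) -> F x /\ F y).

Definition aff_indep (k : nat) (p : 'I_k.+1 -> 'rV[R]_n) : bool :=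
  row_free (\matrix_(i < k) (p (lift ord0 i) - p ord0)).

Definition aff_dim (S : 'rV[R]_n -> Prop) (d : nat) : Prop :=
  (exists p : 'I_d.+1 -> 'rV[R]_n, (forall i, S (p i)) /\ aff_indep p) /\
  (forall p : 'I_d.+2 -> 'rV[R]_n, (forall i, S (p i)) -> ~~ aff_indep p).

Definition is_facet (F C : 'rV[R]_n -> Prop) : Prop :=
  is_face F C /\ aff_dim F n.-1.

Definition aff_hull (S : 'rV[R]_n -> Prop) (y : 'rV[R]_n) : Prop :=
  exists (k : nat) (p : 'I_k -> 'rV[R]_n) (c : 'I_k -> R),
    (forall i, S (p i)) /\ \sum_(i < k) c i = 1 /\ y = \sum_(i < k) c i *: p i.

(* relative interior (neighbourhoods w.r.t. the max-norm) *)
Definition rel_int (S : 'rV[R]_n -> Prop) (x : 'rV[R]_n) : Prop :=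
  S x /\ exists eps : R, 0 < eps /\
    forall y, aff_hull S y -> (forall k, `|y 0 k - x 0 k| < eps) -> S y.

End LCP.

(* Main.v *)
Require Import Defs.
From HB Require Import structures.
From mathcomp Require Import all_boot all_order all_algebra.
Set Implicit Arguments. Unset Strict Implicit. Unset Printing Implicit Defensive.
Import Order.TTheory GRing.Theory Num.Theory.
Local Open Scope ring_scope.

Section Helpers.
Variables (R : realFieldType) (n : nat) (M : 'M[R]_n).

Lemma compl_l (k : 'I_n) : compl_idx (lshift n k) = rshift n k.
Proof. by rewrite /compl_idx (unsplitK (inl _ k)). Qed.
Lemma compl_r (k : 'I_n) : compl_idx (rshift n k) = lshift n k.
Proof. by rewrite /compl_idx (unsplitK (inr _ k)). Qed.

Lemma ord_cases (j : 'I_(n + n)) :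
  (exists k, j = lshift n k) \/ (exists k, j = rshift n k).
Proof.
move: (splitK j); case: (split j) => k /= <-; [left|right]; by exists k.
Qed.

Lemma complK (j : 'I_(n + n)) : compl_idx (compl_idx j) = j.
Proof. case: (ord_cases j) => [[k ->]|[k ->]]; first by rewrite compl_l compl_r. by rewrite compl_r compl_l. Qed.

Lemma compl_neq (j : 'I_(n + n)) : compl_idx j != j.
Proof.
case: (ord_cases j) => [[k ->]|[k ->]]; rewrite ?compl_l ?compl_r;
  apply/negP => /eqP/(congr1 val) /= => H.
  by move: (ltn_ord k); rewrite -H ltnNge leq_addr.
by move: (ltn_ord k); rewrite H ltnNge leq_addr.
Qed.

Lemma gen_entry (j : 'I_(n + n)) r : gen M j 0 r = Amat M r j.
Proof. by rewrite /gen !mxE. Qed.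

Lemma sum_entry (l : 'I_(n + n) -> R) r :
  (\sum_j l j *: gen M j) 0 r =
  l (lshift n r) - (M *m \col_k l (rshift n k)) r 0.
Proof.
rewrite summxE big_split_ord /=.
have -> : \sum_(i < n) (l (lshift n i) *: gen M (lshift n i)) 0 r
          = (1%:M *m \col_k l (lshift n k)) r 0.
  rewrite mxE; apply: eq_bigr => k _.
  by rewrite [LHS]mxE gen_entry /Amat row_mxEl [X in _ = _ * X]mxE mulrC.
rewrite mul1mx mxE; congr (_ + _).
rewrite mxE -sumrN; apply: eq_bigr => k _.
by rewrite [LHS]mxE gen_entry /Amat row_mxEr !mxE mulrN mulrC.
Qed.


Lemma swap_sub (a1 b1 a2 b2 : R) : a1 - b1 = a2 - b2 -> b1 - b2 = a1 - a2.
Proof.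
move=> E; rewrite -(subrK b1 a1) E addrAC [_ - b2 + _]addrAC subrr add0r addrC.
by [].
Qed.

Lemma prod_exp (a b c d : R) : a * c = 0 -> b * d = 0 ->
  (a - b) * (c - d) = - (a * d + b * c).
Proof.
by move=> h1 h2; rewrite mulrBl !mulrBr h1 h2 sub0r subr0 opprD.
Qed.

Lemma suff_cross (hM : column_sufficient M) (l1 l2 : 'I_(n + n) -> R) :
  (forall j, 0 <= l1 j) -> (forall j, 0 <= l2 j) ->
  (forall j, l1 j * l1 (compl_idx j) = 0) ->
  (forall j, l2 j * l2 (compl_idx j) = 0) ->
  \sum_j l1 j *: gen M j = \sum_j l2 j *: gen M j ->
  forall j, l1 j * l2 (compl_idx j) = 0.
Proof.
move=> p1 p2 c1 c2 E.
set z := \col_k (l1 (rshift n k) - l2 (rshift n k)) : 'cV[R]_n.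
have Mz : forall k, (M *m z) k 0 = l1 (lshift n k) - l2 (lshift n k).
  move=> k; have := congr1 (fun x : 'rV[R]_n => x 0 k) E.
  rewrite /= !sum_entry => /swap_sub <-.
  have -> : z = \col_k l1 (rshift n k) - \col_k l2 (rshift n k).
    by apply/matrixP => a b; rewrite !mxE.
  by rewrite mulmxBr !mxE.
have key : forall k, z k 0 * (M *m z) k 0 =
    - (l1 (rshift n k) * l2 (lshift n k) + l2 (rshift n k) * l1 (lshift n k)).
  move=> k; rewrite Mz mxE prod_exp //.
    by rewrite mulrC -compl_l; apply: c1.
  by rewrite mulrC -compl_l; apply: c2.
have H0 : forall k,
    l1 (rshift n k) * l2 (lshift n k) + l2 (rshift n k) * l1 (lshift n k) = 0.
  move=> k; apply/eqP; rewrite -oppr_eq0 -key; apply/eqP; apply: hM => k'.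
  by rewrite key oppr_le0 addr_ge0 // mulr_ge0.
have H1 : forall k, l1 (rshift n k) * l2 (lshift n k) = 0 /\ l2 (rshift n k) * l1 (lshift n k) = 0.
  move=> k; have := H0 k; move/eqP; rewrite paddr_eq0 ?mulr_ge0 //.
  by case/andP => /eqP -> /eqP ->.
move=> j; case: (ord_cases j) => [[k ->]|[k ->]].
  by rewrite compl_l mulrC; case: (H1 k).
by rewrite compl_r; case: (H1 k).
Qed.


Definition ncone (J : {set 'I_(n + n)}) (x : 'rV[R]_n) :=
  exists l : 'I_(n + n) -> R, [/\ forall j, 0 <= l j,
     forall j, j \notin J -> l j = 0 & x = \sum_j l j *: gen M j].

Lemma sum_supp (J : {set 'I_(n + n)}) (l : 'I_(n + n) -> R) :
  (forall j, j \notin J -> l j = 0) ->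
  \sum_j l j *: gen M j = \sum_(j in J) l j *: gen M j.
Proof.
move=> hz; rewrite [RHS]big_mkcond; apply: eq_bigr => j _.
by case: ifP => // /negbT /hz ->; rewrite scale0r.
Qed.

Lemma coneP J x : cone M J x <-> ncone J x.
Proof.
split.
  case=> lam [hl ->]; exists (fun j => if j \in J then lam j else 0); split.
  - by move=> j; case: ifP => [/hl //|_]; exact: lexx.
  - by move=> j /negbTE ->.
  - rewrite big_mkcond /=; apply: eq_bigr => j _.
    by case: ifP => _; rewrite ?scale0r.
by case=> l [hl hz ->]; exists l; split => //; exact: sum_supp.
Qed.

Definition indep (J : {set 'I_(n + n)}) := forall c : 'I_(n + n) -> R,
  (forall j, j \notin J -> c j = 0) -> \sum_j c j *: gen M j = 0 ->
  forall j, c j = 0.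

Lemma sum_Asub (J : {set 'I_(n + n)})(c : 'I_(n + n) -> R) :
  \sum_(j in J) c j *: gen M j = (\row_k c (enum_val k)) *m (Asub M J)^T.
Proof.
rewrite big_enum_val; apply/matrixP => a r; rewrite summxE !mxE.
apply: eq_bigr => k _; rewrite (ord1 a) [LHS]mxE gen_entry !mxE.
by [].
Qed.

End Helpers.

Lemma cast_unit_inj (R : realFieldType) (m k : nat) (e : m = k)
  (X : 'M[R]_(k, m)) : castmx (erefl k, e) X \in unitmx ->
  forall v : 'rV_m, v *m X^T = 0 -> v = 0.
Proof.
case: k / e X => X; rewrite castmx_id => uX v Hv.
have uXt : X^T \in unitmx by rewrite unitmx_tr.
by rewrite -(mulmxK uXt v) Hv mul0mx.
Qed.

Section Helpers2.
Variables (R : realFieldType) (n : nat) (M : 'M[R]_n).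

Lemma basis_card (J : {set 'I_(n + n)}) : is_basis M J -> #|J| = n.
Proof. by case. Qed.

Lemma basis_inj (J : {set 'I_(n + n)}) : is_basis M J ->
  forall v : 'rV_#|J|, v *m (Asub M J)^T = 0 -> v = 0.
Proof. by case=> e; apply: cast_unit_inj. Qed.

Lemma basis_indep (J : {set 'I_(n + n)}) : is_basis M J -> indep M J.
Proof.
move=> hB c hc hs j; case: (boolP (j \in J)) => hj; last exact: hc.
have : \row_k c (enum_val k) = 0 :> 'rV_#|J|.
  by apply: (basis_inj hB); rewrite -sum_Asub -sum_supp.
move/matrixP/(_ 0 (enum_rank_in hj j)); rewrite !mxE.
by rewrite (enum_rankK_in hj hj).
Qed.

Lemma indep_sub (J J' : {set 'I_(n + n)}) : J' \subset J -> indep M J -> indep M J'.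
Proof.
move=> s h c hc; apply: h => j hj; apply: hc; apply: contra hj.
exact: (subsetP s).
Qed.

Lemma uniq_rep (J : {set 'I_(n + n)}) (l1 l2 : 'I_(n + n) -> R) : indep M J ->
  (forall j, j \notin J -> l1 j = 0) -> (forall j, j \notin J -> l2 j = 0) ->
  \sum_j l1 j *: gen M j = \sum_j l2 j *: gen M j -> forall j, l1 j = l2 j.
Proof.
move=> h h1 h2 E j; apply/eqP; rewrite -subr_eq0; apply/eqP; move: j.
apply: (h (fun j => l1 j - l2 j)) => [j hj|]; first by rewrite h1 ?h2 ?subrr.
rewrite (eq_bigr (fun j => l1 j *: gen M j - l2 j *: gen M j)) => [|j _].
  by rewrite sumrB E subrr.
by rewrite scalerBl.
Qed.


Lemma ncone_lin (J : {set 'I_(n + n)}) x y (a b : R) : 0 <= a -> 0 <= b ->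
  ncone M J x -> ncone M J y -> ncone M J (a *: x + b *: y).
Proof.
move=> ha hb [l1 [p1 z1 ->]] [l2 [p2 z2 ->]].
exists (fun j => a * l1 j + b * l2 j); split.
- by move=> j; rewrite addr_ge0 ?mulr_ge0.
- by move=> j hj; rewrite z1 ?z2 ?mulr0 ?addr0.
- rewrite !scaler_sumr -big_split /=; apply: eq_bigr => j _.
  by rewrite scalerDl !scalerA.
Qed.

Lemma ncone_gen (J : {set 'I_(n + n)}) j : j \in J -> ncone M J (gen M j).
Proof.
move=> hj; exists (fun j' => (j' == j)%:R); split.
- by move=> j'; rewrite ler0n.
- by move=> j' hj'; case: eqP hj' => // ->; rewrite hj.
- rewrite (bigD1 j) //= eqxx scale1r big1 ?addr0 // => j' /negbTE ->.
  by rewrite scale0r.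
Qed.

Lemma ncone0 (J : {set 'I_(n + n)}) : ncone M J 0.
Proof.
exists (fun _ => 0); split => //; by rewrite big1 // => j _; rewrite scale0r.
Qed.

Lemma ncone_sub (J J' : {set 'I_(n + n)}) x :
  J \subset J' -> ncone M J x -> ncone M J' x.
Proof.
move=> s [l [p z ->]]; exists l; split => // j hj; apply: z.
by apply: contra hj; exact: (subsetP s).
Qed.

Lemma ncone_span (J : {set 'I_(n + n)}) x : ncone M J x ->
  exists v : 'rV_#|J|, x = v *m (Asub M J)^T.
Proof.
case=> l [_ hz ->]; exists (\row_k l (enum_val k)).
by rewrite (sum_supp M hz) sum_Asub.
Qed.

Lemma indep_rowfree (J : {set 'I_(n + n)}) : indep M J ->
  row_free (Asub M J)^T.
Proof.
move=> hI; set X := (Asub M J)^T.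
have hk : kermx X = 0.
  apply/row_matrixP => t; rewrite row0.
  have hv : row t (kermx X) *m X = 0 by apply/sub_kermxP; exact: row_sub.
  move: hv; set v := row t (kermx X) => hv.
  pose c := fun j => if [pick k | enum_val k == j] is Some k then v 0 k else 0.
  have cev : forall k, c (enum_val k) = v 0 k.
    move=> k; rewrite /c; case: pickP => [k' /eqP /enum_val_inj -> //|].
    by move/(_ k); rewrite eqxx.
  have cz : forall j, j \notin J -> c j = 0.
    move=> j hj; rewrite /c; case: pickP => [k' /eqP hk'|//].
    by move: hj; rewrite -hk' enum_valP.
  have cs : \sum_j c j *: gen M j = 0.
    rewrite (sum_supp M cz) sum_Asub -hv; congr (_ *m _).
    by apply/rowP => k; rewrite [LHS]mxE cev.
  apply/rowP => k; rewrite [RHS]mxE -cev; exact: hI cz cs _.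
rewrite /row_free eqn_leq rank_leq_row /=.
by move: (mxrank_ker X); rewrite hk mxrank0 => /esym/eqP; rewrite subn_eq0.
Qed.


Lemma facet_lemma (J : {set 'I_(n + n)}) c : is_basis M J -> c \in J ->
  is_facet (cone M (J :\ c)) (cone M J).
Proof.
move=> hB hc; have hI := basis_indep hB.
split; [split; [|split]|].
- move=> x /coneP h; apply/coneP; apply: ncone_sub h; exact: subD1set.
- move=> x y t /coneP hx /coneP hy /andP[t0 t1]; apply/coneP.
  by apply: ncone_lin => //; rewrite subr_ge0.
- move=> x y t /coneP [lx [px zx ex]] /coneP [ly [py zy ey]] /andP[t0 t1].
  move=> /coneP [lz [pz zz ez]].
  have E : forall j, t * lx j + (1 - t) * ly j = lz j.
    apply: (uniq_rep hI) => [j hj | j hj | ].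
    + by rewrite zx ?zy ?mulr0 ?addr0.
    + by apply: zz; apply: contra hj; exact: (subsetP (subD1set J c)).
    + rewrite -ez ex ey !scaler_sumr -big_split; apply: eq_bigr => j _.
      by rewrite scalerDl !scalerA.
  have := E c; rewrite zz ?setD11 // => /eqP.
  have t0' : (t == 0) = false by rewrite gt_eqF.
  have t1' : (1 - t == 0) = false by rewrite gt_eqF // subr_gt0.
  have t0w := ltW t0; have t1w : 0 <= 1 - t by rewrite subr_ge0 ltW.
  rewrite paddr_eq0 ?mulr_ge0 // !mulf_eq0 t0' t1' /=.
  case/andP => /eqP lxc /eqP lyc.
  split; apply/coneP.
    exists lx; split => // j; rewrite in_setD1 negb_and negbK.
    by case/orP => [/eqP -> // | /zx].
  exists ly; split => // j; rewrite in_setD1 negb_and negbK.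
  by case/orP => [/eqP -> // | /zy].
have hm : n.-1 = #|J :\ c|.
  have h : (#|J :\ c|).+1 = n.
    by rewrite -[RHS](basis_card hB) (cardsD1 c J) hc.
  by rewrite -[X in X.-1 = _]h.
split.
  pose p := fun s : 'I_(n.-1).+1 =>
    if unlift ord0 s is Some t then gen M (enum_val (cast_ord hm t)) else 0.
  exists p; split.
    move=> s; rewrite /p; case: (unlift ord0 s) => [t|]; apply/coneP.
      by apply: ncone_gen; exact: enum_valP.
    exact: ncone0.
  rewrite /aff_indep.
  have -> : \matrix_(s < n.-1) (p (lift ord0 s) - p ord0)
           = castmx (esym hm, erefl n) (Asub M (J :\ c))^T.
    apply/matrixP => s r; rewrite castmxE !mxE /p liftK unlift_none.
    rewrite [X in _ - X]mxE subr0 gen_entry.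
    have -> : cast_ord (esym (esym hm, erefl n).1) s = cast_ord hm s by apply: val_inj.
    by rewrite cast_ord_id /Amat !mxE.
  rewrite (@row_free_castmx _ _ _ _ (Asub M (J :\ c))^T (esym hm, erefl n)).
  apply: indep_rowfree; apply: indep_sub hI.
  exact: subD1set.
move=> p hp; set X := \matrix_(s < n.-1.+1) (p (lift ord0 s) - p ord0).
have sub : (X <= (Asub M (J :\ c))^T)%MS.
  apply/row_subP => s; rewrite rowK.
  have /coneP/ncone_span [v1 ->] := hp (lift ord0 s).
  have /coneP/ncone_span [v0 ->] := hp ord0.
  by rewrite -mulmxBl; exact: submxMl.
rewrite /aff_indep /row_free -/X; apply/negP => /eqP hr.
have := mxrankS sub; rewrite hr => h1.
have := leq_trans h1 (rank_leq_row (Asub M (J :\ c))^T).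
by rewrite -hm ltnn.
Qed.


Lemma comp_prod (J : {set 'I_(n + n)}) (l : 'I_(n + n) -> R) :
  complementary J -> (forall j, j \notin J -> l j = 0) ->
  forall j, l j * l (compl_idx j) = 0.
Proof.
move=> hc hz j; case: (boolP (j \in J)) => hj.
  by rewrite (hz (compl_idx j)) ?mulr0 // hc.
by rewrite hz ?mul0r.
Qed.

Definition pidx (j : 'I_(n + n)) : 'I_n :=
  match split j with inl k => k | inr k => k end.

Lemma pidx_l k : pidx (lshift n k) = k.
Proof. by rewrite /pidx (unsplitK (inl _ k)). Qed.
Lemma pidx_r k : pidx (rshift n k) = k.
Proof. by rewrite /pidx (unsplitK (inr _ k)). Qed.

Lemma pidx_eq a b : pidx a = pidx b -> a = b \/ a = compl_idx b.
Proof.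
case: (ord_cases a) => [[k ->]|[k ->]]; case: (ord_cases b) => [[k' ->]|[k' ->]];
  rewrite ?pidx_l ?pidx_r ?compl_l ?compl_r => ->; by [left|right].
Qed.

Lemma pair_cover (J : {set 'I_(n + n)}) : complementary J -> #|J| = n ->
  forall m, m \in J \/ compl_idx m \in J.
Proof.
move=> hc hn.
have inj : {in J &, injective pidx}.
  move=> a b ha hb /pidx_eq [//|hab].
  by move: (hc b hb); rewrite -hab ha.
have full : pidx @: J = setT.
  apply/eqP; rewrite eqEcard subsetT cardsT card_ord card_in_imset ?hn ?leqnn //=.
move=> m; have : pidx m \in pidx @: J by rewrite full inE.
case/imsetP => a ha /pidx_eq [-> | ->]; first by left.
by right; rewrite complK.
Qed.

End Helpers2.

Theorem mainTheorem2 (R : realFieldType) (n : nat) (M : 'M[R]_n)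
    (B : {set 'I_(n + n)}) (i : 'I_(n + n)) :
  sufficient M ->
  comp_basis M B ->
  i \in B ->
  is_basis M (compl_idx i |: (B :\ i)) ->
  [/\ is_facet (cone M (B :\ i)) (cone M B),
      is_facet (cone M (B :\ i)) (cone M (compl_idx i |: (B :\ i))),
      (forall x, (cone M B x /\ cone M (compl_idx i |: (B :\ i)) x)
                 <-> cone M (B :\ i) x)
    & (forall B'' : {set 'I_(n + n)}, comp_basis M B'' ->
         B'' <> B -> B'' <> compl_idx i |: (B :\ i) ->
         forall x, cone M B'' x -> ~ rel_int (cone M (B :\ i)) x)].
Proof.
move=> [hM _] [hcB hbB] hiB hbB'.
set i' := compl_idx i; set B' := i' |: (B :\ i).
have hIB := basis_indep hbB; have hIB' := basis_indep hbB'.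
have i'B : i' \notin B := hcB i hiB.
have i'Bi : i' \notin B :\ i by rewrite in_setD1 negb_and i'B orbT.
have hB'i : B' :\ i' = B :\ i by rewrite setU1K.
have hcB' : complementary B'.
  move=> j; rewrite in_setU1 => /orP [/eqP -> | hj].
    rewrite /i' complK !inE eqxx /= orbF eq_sym.
    exact: compl_neq.
  move: hj; rewrite in_setD1 => /andP [ji jB].
  rewrite !inE (negbTE (hcB j jB)) andbF orbF; apply/eqP.
  move=> /(congr1 (@compl_idx n)); rewrite !complK => /eqP.
  by rewrite (negbTE ji).
have BiB' : B :\ i \subset B' by exact: subsetUr.
split.
- exact: facet_lemma.
- rewrite -hB'i; apply: facet_lemma hbB' _; exact: setU11.
- move=> x; split.
    case=> /coneP [l1 [p1 z1 e1]] /coneP [l2 [p2 z2 e2]].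
    have hx := suff_cross hM p1 p2 (comp_prod hcB z1) (comp_prod hcB' z2)
                 (etrans (esym e1) e2) i.
    move/eqP: hx; rewrite mulf_eq0 => /orP [/eqP h | /eqP h]; apply/coneP.
      exists l1; split => // j; rewrite in_setD1 negb_and negbK.
      by case/orP => [/eqP -> // | /z1].
    exists l2; split => // j hj.
    case: (eqVneq j i') => [-> //| ji]; apply: z2.
    by rewrite in_setU1 negb_or ji hj.
  move=> /coneP h; split; apply/coneP; apply: ncone_sub h => //.
  exact: subD1set.
move=> B'' [hcB'' hbB''] nB nB' x /coneP [l2 [p2 z2 e2]].
case=> /coneP [l1 [p1 z1 e1]] [eps [heps hrel]].
have z1B : forall j, j \notin B -> l1 j = 0.
  by move=> j hj; apply: z1; apply: contra hj; exact: (subsetP (subD1set B i)).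
have pos : forall j, j \in B :\ i -> 0 < l1 j.
  move=> j hj; rewrite lt_def p1 andbT; apply/negP => /eqP l1j.
  set g := gen M j.
  pose S := \sum_k `|g 0 k|.
  have S0 : 0 <= S by apply: sumr_ge0 => k _; exact: normr_ge0.
  have S1 : 0 < S + 1 by apply: (le_lt_trans S0); rewrite ltrDl ltr01.
  pose d := eps / (S + 1).
  have d0 : 0 < d by rewrite divr_gt0.
  have jB : j \in B by move: hj; rewrite in_setD1 => /andP[].
  have hy : cone M (B :\ i) (x - d *: g).
    apply: hrel.
      exists 2%N, (fun s : 'I_2 => if (s : nat) == 0%N then x else x + g),
        (fun s : 'I_2 => if (s : nat) == 0%N then 1 + d else - d).
      split; [|split].
      + move=> s; case: ifP => _; first by apply/coneP; exists l1.
        apply/coneP; have -> : x + g = 1 *: x + 1 *: g by rewrite !scale1r.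
        apply: ncone_lin; rewrite ?ler01 //; [by exists l1 | exact: ncone_gen].
      + by rewrite big_ord_recl big_ord1 /= addrK.
      + rewrite big_ord_recl big_ord1 /= scalerDl scale1r scalerDr !scaleNr.
        by rewrite addrA addrK.
    move=> k.
    have -> : (x - d *: g) 0 k - x 0 k = - (d * g 0 k).
      by rewrite !mxE addrAC subrr add0r.
    rewrite normrN normrM (gtr0_norm d0).
    have hgk : `|g 0 k| <= S.
      rewrite /S (bigD1 k) //= lerDl; apply: sumr_ge0 => k' _; exact: normr_ge0.
    apply: (le_lt_trans (ler_wpM2l (ltW d0) hgk)).
    apply: (lt_le_trans (_ : d * S < d * (S + 1))).
      by rewrite ltr_pM2l // ltrDl ltr01.
    by rewrite /d divfK // gt_eqF.
  case/coneP: hy => l' [p' z' e'].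
  have s1 : forall j', j' \notin B -> l' j' = 0.
    by move=> j' hj'; apply: z'; apply: contra hj'; exact: (subsetP (subD1set B i)).
  have s2 : forall j', j' \notin B -> l1 j' - (if j' == j then d else 0) = 0.
    move=> j' hj'; rewrite z1B //; case: eqP => [e|_]; last by rewrite subrr.
    by rewrite e jB in hj'.
  have s3 : \sum_j' l' j' *: gen M j' =
      \sum_j' (l1 j' - (if j' == j then d else 0)) *: gen M j'.
    rewrite -e' (eq_bigr (fun j' => l1 j' *: gen M j' - (if j' == j then d else 0) *: gen M j')) => [|j' _]; last by rewrite scalerBl.
    rewrite sumrB -e1; congr (_ - _).
    rewrite (bigD1 j) //= eqxx big1 ?addr0 // => j' /negbTE ->.
    by rewrite scale0r.
  have := uniq_rep hIB s1 s2 s3 j.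
  rewrite eqxx l1j sub0r => h.
  have := p' j; rewrite h => hd.
  have : 0 < 0 :> R by apply: (le_lt_trans hd); rewrite oppr_lt0.
  by rewrite ltxx.
have [k hk hk'] : exists2 k, k \in B :\ i & compl_idx k \in B''.
  case: (boolP [exists k, (k \in B :\ i) && (compl_idx k \in B'')]) =>
    [/existsP [k /andP [h1 h2]] | hno]; first by exists k.
  exfalso.
  have sub : B :\ i \subset B''.
    apply/subsetP => k hk.
    case: (pair_cover hcB'' (basis_card hbB'') k) => // hk'.
    by move/existsPn: hno => /(_ k); rewrite hk hk'.
  case: (pair_cover hcB'' (basis_card hbB'') i) => hi.
    apply: nB; apply/eqP; rewrite eq_sym eqEcard (basis_card hbB).
    rewrite (basis_card hbB'') leqnn andbT.
    apply/subsetP => j hj; case: (eqVneq j i) => [-> //|ne].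
    by apply: (subsetP sub); rewrite in_setD1 ne hj.
  apply: nB'; apply/eqP; rewrite eq_sym eqEcard (basis_card hbB').
  rewrite (basis_card hbB'') leqnn andbT.
  apply/subsetP => j; rewrite in_setU1 => /orP [/eqP -> // | ].
  exact: (subsetP sub).
have cross : forall j, l2 j * l1 (compl_idx j) = 0.
  exact: (suff_cross hM p2 p1 (comp_prod hcB'' z2) (comp_prod hcB z1B)
           (etrans (esym e2) e1)).
have supp : forall j, l2 j != 0 -> j \in B \/ j = i'.
  move=> j hj.
  case: (pair_cover hcB (basis_card hbB) j) => [| hcj]; first by left.
  case: (eqVneq (compl_idx j) i) => [e | ne].
    by right; rewrite /i' -e complK.
  have := pos (compl_idx j); rewrite in_setD1 ne hcj => /(_ isT) hp.
  by move/eqP: (cross j); rewrite mulf_eq0 (negbTE hj) /= gt_eqF.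
have eqk : l1 k = l2 k.
  case: (eqVneq (l2 i') 0) => h2.
    apply: (uniq_rep hIB z1B) => [j hj|]; last by rewrite -e1 -e2.
    apply/eqP; apply: contraT => hj0; case: (supp j hj0) => [hjB | hji]; first by rewrite hjB in hj.
    by move: hj0; rewrite hji h2 eqxx.
  have i'B'' : i' \in B'' by apply: contraT => /z2 h; rewrite h eqxx in h2.
  have iB'' : i \notin B'' by move: (hcB'' _ i'B''); rewrite /i' complK.
  have l2i : l2 i = 0 by apply: z2.
  apply: (uniq_rep hIB') => [j hj|j hj|]; last by rewrite -e1 -e2.
    apply: z1; apply: contra hj; exact: (subsetP BiB').
  apply/eqP; apply/negP => /negP hj0; have [hjB | hji] := supp j hj0.
    case: (eqVneq j i) => [hji | hji]; first by rewrite hji l2i eqxx in hj0.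
    by move: hj; rewrite !inE hji hjB orbT.
  by move: hj; rewrite hji setU11.
have : l2 k != 0 by rewrite -eqk gt_eqF // pos.
apply/negP; rewrite negbK; apply/eqP; apply: z2.
by move: (hcB'' _ hk'); rewrite complK.
Qed.
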